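(* Let $K>1$ and let $1\le k\le n$ be integers. Let $X_1,\ldots,X_n$ be independent non-negative random variables with cumulative distribution functions $F_1,\ldots,F_n$, each satisfying condition (C) below with parameter $K$. Set $F=\frac1n\sum_{i=1}^n F_i$ and let $q=q_F\big(\frac{k-1/2}{n}\big)$ be any quantile of order $\frac{k-1/2}{n}$ of $F$. Then for every $0<t<K^{-5}$, $$\mathbb P\Big\{\operatorname{k\text{-}min}_{1\le i\le n}X_i< t\,q\Big\}\le 4\,t^{1/(4\ln K)},$$ and for every $t>K^5$, $$\mathbb P\Big\{\operatorname{k\text{-}min}_{1\le i\le n}X_i> t\,q\Big\}\le 4\,t^{-1/(6\ln K)}.$$ In particular, every median $M$ of $\operatorname{k\text{-}min}_{1\le i\le n}X_i$ satisfies $$K^{-10}\,q\le M\le K^{13}\,q.$$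
   Context: For real numbers $a_1,\ldots,a_n$ and $1\le k\le n$, $\operatorname{k\text{-}min}_{i\le n}a_i$ denotes the $k$-th smallest element of the sequence (counted with multiplicity). Condition (C) with parameter $K>1$ for the cdf $F$ of a non-negative random variable: $\frac{F(Kt)}{1-F(Kt)}\ge \frac{2F(t)}{1-F(t)}$ for all $t>0$, with the conventions $1/0=\infty$, $1/\infty=0$. For a cdf $G$ (of a random variable $\xi$) and $r\in[0,1]$, a quantile of order $r$ is any number $q_G(r)$ with $\mathbb P\{\xi<q_G(r)\}\le r$ and $\mathbb P\{\xi\le q_G(r)\}\ge r$ (not necessarily unique); for $F=\frac1n\sum F_i$ this means $F(s)\le r$ for all $s<q_F(r)$ and $F(q_F(r))\ge r$. *)

(* Defs.v *)
From Stdlib Require Import Reals Lra List.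
Open Scope R_scope.

Record ProbSpace := mkPS {
  ps_car : Type;
  ps_meas : (ps_car -> Prop) -> Prop;
  ps_P : (ps_car -> Prop) -> R;
  meas_full : ps_meas (fun _ => True);
  meas_compl : forall A, ps_meas A -> ps_meas (fun w => ~ A w);
  meas_union : forall A : nat -> ps_car -> Prop,
      (forall m, ps_meas (A m)) -> ps_meas (fun w => exists m, A m w);
  P_nonneg : forall A, ps_meas A -> 0 <= ps_P A;
  P_full : ps_P (fun _ => True) = 1;
  P_sigma_add : forall A : nat -> ps_car -> Prop,
      (forall m, ps_meas (A m)) ->
      (forall m m' w, m <> m' -> A m w -> A m' w -> False) ->
      infinite_sum (fun m => ps_P (A m)) (ps_P (fun w => exists m, A m w))
}.

Definition random_variable (Om : ProbSpace) (X : ps_car Om -> R) : Prop :=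
  forall a : R, ps_meas Om (fun w => X w <= a).

Definition cdf (Om : ProbSpace) (X : ps_car Om -> R) (t : R) : R :=
  ps_P Om (fun w => X w <= t).

Fixpoint Rsum_upto (n : nat) (f : nat -> R) : R :=
  match n with O => 0 | S m => Rsum_upto m f + f m end.
Fixpoint Rprod_upto (n : nat) (f : nat -> R) : R :=
  match n with O => 1 | S m => Rprod_upto m f * f m end.

Definition independent (Om : ProbSpace) (n : nat) (X : nat -> ps_car Om -> R) : Prop :=
  forall a : nat -> R,
    ps_P Om (fun w => forall i, (i < n)%nat -> X i w <= a i)
    = Rprod_upto n (fun i => cdf Om (X i) (a i)).

Fixpoint insert_sorted (x : R) (l : list R) : list R :=
  match l with
  | nil => x :: nil
  | y :: l' => if Rle_dec x y then x :: y :: l' else y :: insert_sorted x l'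
  end.
Fixpoint isort (l : list R) : list R :=
  match l with nil => nil | x :: l' => insert_sorted x (isort l') end.
(* k-min of the sequence l, for 1 <= k <= length l *)
Definition kmin (k : nat) (l : list R) : R := nth (k - 1) (isort l) 0.

(* None stands for +infinity *)
Definition odds (a : R) : option R :=
  if Req_EM_T a 1 then None else Some (a / (1 - a)).
Definition ext_scale (c : R) (x : option R) : option R :=
  match x with None => None | Some y => Some (c * y) end.
Definition ext_le (x y : option R) : Prop :=
  match x, y with
  | _, None => True
  | None, Some _ => False
  | Some a, Some b => a <= b
  end.
(* F(Kt)/(1-F(Kt)) >= 2 F(t)/(1-F(t)) for all t > 0, with 1/0 = infinity *)
Definition condC (F : R -> R) (K : R) : Prop :=
  forall t, 0 < t -> ext_le (ext_scale 2 (odds (F t))) (odds (F (K * t))).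

Definition is_quantile (G : R -> R) (r q : R) : Prop :=
  (forall s, s < q -> G s <= r) /\ r <= G q.

Definition is_median (Om : ProbSpace) (Y : ps_car Om -> R) (M : R) : Prop :=
  1/2 <= ps_P Om (fun w => Y w <= M) /\ 1/2 <= ps_P Om (fun w => M <= Y w).

(* Main.v *)
Require Import Defs.
From Stdlib Require Import Reals Lra Lia List Classical FunctionalExtensionality PropExtensionality.
Open Scope R_scope.

Lemma ev_ext (Om : ProbSpace) (A B : ps_car Om -> Prop) :
  (forall w, A w <-> B w) -> A = B.
Proof. intros H; apply functional_extensionality; intros w; apply propositional_extensionality; auto. Qed.

Lemma meas_ext (Om : ProbSpace) (A B : ps_car Om -> Prop) :
  (forall w, A w <-> B w) -> ps_meas Om A -> ps_meas Om B.
Proof. intros H; rewrite (ev_ext Om A B H); auto. Qed.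

Lemma P_ext (Om : ProbSpace) (A B : ps_car Om -> Prop) :
  (forall w, A w <-> B w) -> ps_P Om A = ps_P Om B.
Proof. intros H; rewrite (ev_ext Om A B H); auto. Qed.

Lemma meas_empty (Om : ProbSpace) : ps_meas Om (fun _ => False).
Proof. apply (meas_ext Om (fun w => ~ True)). tauto. apply meas_compl, meas_full. Qed.

Lemma meas_or (Om : ProbSpace) (A B : ps_car Om -> Prop) :
  ps_meas Om A -> ps_meas Om B -> ps_meas Om (fun w => A w \/ B w).
Proof.
  intros HA HB.
  apply (meas_ext Om (fun w => exists m : nat, (if Nat.eqb m 0 then A else B) w)).
  - intros w; split.
    + intros [m Hm]; destruct (Nat.eqb m 0); auto.
    + intros [H|H]. exists 0%nat; auto. exists 1%nat; auto.
  - apply meas_union; intros m; destruct (Nat.eqb m 0); auto.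
Qed.

Lemma meas_not (Om : ProbSpace) (A : ps_car Om -> Prop) :
  ps_meas Om A -> ps_meas Om (fun w => ~ A w).
Proof. apply meas_compl. Qed.

Lemma meas_and (Om : ProbSpace) (A B : ps_car Om -> Prop) :
  ps_meas Om A -> ps_meas Om B -> ps_meas Om (fun w => A w /\ B w).
Proof.
  intros HA HB.
  apply (meas_ext Om (fun w => ~ (~ A w \/ ~ B w))).
  - intros w; split; [intros H; split; apply NNPP; tauto | tauto].
  - apply meas_compl, meas_or; apply meas_compl; auto.
Qed.

Lemma P_empty (Om : ProbSpace) : ps_P Om (fun _ => False) = 0.
Proof.
  set (c := ps_P Om (fun _ => False)).
  assert (H := P_sigma_add Om (fun _ => fun _ => False) (fun _ => meas_empty Om)
                 (fun m m' w _ H _ => H)). cbv beta in H.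
  rewrite (P_ext Om (fun w => exists m:nat, False) (fun _ => False)) in H
    by (intros w; split; [intros [_ H0]; auto | tauto]).
  fold c in H.
  assert (Hs : forall n, sum_f_R0 (fun _ => c) n = INR (S n) * c).
  { induction n; simpl sum_f_R0. simpl; ring. rewrite IHn. rewrite !S_INR. ring. }
  destruct (Req_dec c 0) as [|Hc]; auto.
  assert (Hpos : Rabs c > 0) by (apply Rabs_pos_lt; auto).
  destruct (H (Rabs c) Hpos) as [N HN].
  specialize (HN (S N) ltac:(lia)). rewrite Hs in HN.
  unfold Rdist in HN.
  replace (INR (S (S N)) * c - c) with (INR (S N) * c) in HN by (rewrite (S_INR (S N)); ring).
  rewrite Rabs_mult, Rabs_right in HN by (apply Rle_ge, pos_INR).
  assert (1 <= INR (S N)) by (rewrite S_INR; assert (0 <= INR N) by apply pos_INR; lra).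
  nra.
Qed.

Lemma P_or (Om : ProbSpace) (A B : ps_car Om -> Prop) :
  ps_meas Om A -> ps_meas Om B -> (forall w, A w -> B w -> False) ->
  ps_P Om (fun w => A w \/ B w) = ps_P Om A + ps_P Om B.
Proof.
  intros HA HB Hd.
  set (S := fun m : nat => match m with O => A | 1%nat => B | _ => fun _ : ps_car Om => False end).
  assert (HS : forall m, ps_meas Om (S m)).
  { intros [|[|m]]; simpl; auto. apply meas_empty. }
  assert (Hdis : forall m m' w, m <> m' -> S m w -> S m' w -> False).
  { intros [|[|m]] [|[|m']] w Hne H1 H2; simpl in *; eauto; lia. }
  assert (H := P_sigma_add Om S HS Hdis). cbv beta in H.
  rewrite (P_ext Om (fun w => exists m, S m w) (fun w => A w \/ B w)) in H.
  2:{ intros w; split. intros [[|[|m]] Hm]; simpl in Hm; tauto.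
      intros [H1|H1]. exists 0%nat; auto. exists 1%nat; auto. }
  apply (uniqueness_sum (fun m => ps_P Om (S m))); auto.
  intros eps Heps. exists 1%nat. intros m Hm.
  assert (sum_f_R0 (fun m => ps_P Om (S m)) m = ps_P Om A + ps_P Om B).
  { induction m. lia. destruct m. simpl; ring.
    rewrite tech5, IHm by lia. simpl. rewrite P_empty; ring. }
  rewrite H0; unfold Rdist; rewrite Rminus_diag, Rabs_R0; auto.
Qed.

Lemma P_split (Om : ProbSpace) (A E : ps_car Om -> Prop) :
  ps_meas Om A -> ps_meas Om E ->
  ps_P Om A = ps_P Om (fun w => A w /\ E w) + ps_P Om (fun w => A w /\ ~ E w).
Proof.
  intros HA HE. rewrite <- P_or.
  apply P_ext; intros w; destruct (classic (E w)); tauto.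
  apply meas_and; auto. apply meas_and; auto; apply meas_compl; auto.
  tauto.
Qed.

Lemma P_nonneg' (Om : ProbSpace) (A : ps_car Om -> Prop) : ps_meas Om A -> 0 <= ps_P Om A.
Proof. apply P_nonneg. Qed.

Lemma P_mono (Om : ProbSpace) (A B : ps_car Om -> Prop) :
  ps_meas Om A -> ps_meas Om B -> (forall w, A w -> B w) -> ps_P Om A <= ps_P Om B.
Proof.
  intros HA HB H. rewrite (P_split Om B A HB HA).
  rewrite (P_ext Om (fun w => B w /\ A w) A) by (intros w; split; tauto || (intros; split; auto)).
  assert (0 <= ps_P Om (fun w => B w /\ ~ A w)).
  apply P_nonneg, meas_and; auto; apply meas_compl; auto. lra.
Qed.

Lemma P_le1 (Om : ProbSpace) (A : ps_car Om -> Prop) : ps_meas Om A -> ps_P Om A <= 1.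
Proof. intros HA. rewrite <- (P_full Om). apply P_mono; auto. apply meas_full. Qed.

Lemma P_compl (Om : ProbSpace) (A : ps_car Om -> Prop) : ps_meas Om A ->
  ps_P Om (fun w => ~ A w) = 1 - ps_P Om A.
Proof.
  intros HA. rewrite <- (P_full Om). rewrite (P_split Om (fun _ => True) A) by (auto; apply meas_full).
  rewrite (P_ext Om (fun w => True /\ A w) A) by tauto.
  rewrite (P_ext Om (fun w => True /\ ~ A w) (fun w => ~ A w)) by tauto. ring.
Qed.

Lemma P_cont_below (Om : ProbSpace) (A : nat -> ps_car Om -> Prop) :
  (forall m, ps_meas Om (A m)) -> (forall m w, A m w -> A (S m) w) ->
  Un_cv (fun m => ps_P Om (A m)) (ps_P Om (fun w => exists m, A m w)).
Proof.
  intros HA Hinc.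
  assert (Hmono : forall m m' w, (m <= m')%nat -> A m w -> A m' w).
  { intros m m' w Hle; induction Hle; auto. }
  set (B := fun m => match m with O => A O | S m' => fun w => A (S m') w /\ ~ A m' w end).
  assert (HB : forall m, ps_meas Om (B m)).
  { intros [|m]; simpl; auto. apply meas_and; auto. apply meas_compl; auto. }
  assert (Hdis : forall m m' w, m <> m' -> B m w -> B m' w -> False).
  { assert (Hl : forall m m' w, (m < m')%nat -> B m w -> B m' w -> False).
    { intros m [|m'] w Hlt H1 H2. lia. simpl in H2. destruct H2 as [_ H2]; apply H2.
      apply (Hmono m). lia. destruct m; simpl in H1; tauto. }
    intros m m' w Hne H1 H2. destruct (Nat.lt_ge_cases m m'). eauto.
    apply (Hl m' m w); auto; lia. }
  assert (H := P_sigma_add Om B HB Hdis). cbv beta in H.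
  rewrite (P_ext Om (fun w => exists m, B m w) (fun w => exists m, A m w)) in H.
  2:{ intros w; split.
      - intros [[|m] Hm]; simpl in Hm. eauto. exists (S m); tauto.
      - intros [m Hm]. induction m. exists 0%nat; auto.
        destruct (classic (A m w)). auto. exists (S m); simpl; auto. }
  assert (Hsum : forall N, sum_f_R0 (fun m => ps_P Om (B m)) N = ps_P Om (A N)).
  { induction N. simpl; auto. simpl sum_f_R0. rewrite IHN.
    rewrite (P_split Om (A (S N)) (A N)); auto.
    rewrite (P_ext Om (fun w => A (S N) w /\ A N w) (A N)). simpl; ring.
    intros w; split; [tauto | auto]. }
  intros eps Heps. destruct (H eps Heps) as [N HN]. exists N. intros m Hm.
  rewrite <- Hsum. auto.
Qed.

Definition lit (o : option bool) (P : Prop) : Prop :=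
  match o with Some true => P | Some false => ~ P | None => True end.
Definition wt (o : option bool) (p : R) : R :=
  match o with Some true => p | Some false => 1 - p | None => 1 end.
Definition prodprop (Om : ProbSpace) (n : nat) (E : nat -> ps_car Om -> Prop) (p : nat -> R) :=
  forall L : nat -> option bool,
    ps_P Om (fun w => forall i, (i < n)%nat -> lit (L i) (E i w))
    = Rprod_upto n (fun i => wt (L i) (p i)).

Lemma prod_ext (n : nat) (f g : nat -> R) :
  (forall i, (i < n)%nat -> f i = g i) -> Rprod_upto n f = Rprod_upto n g.
Proof. induction n; intros H; simpl; auto. rewrite IHn, H; auto. Qed.

Lemma sum_ext (n : nat) (f g : nat -> R) :
  (forall i, (i < n)%nat -> f i = g i) -> Rsum_upto n f = Rsum_upto n g.
Proof. induction n; intros H; simpl; auto. rewrite IHn, H; auto. Qed.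

Lemma prod_upd (n j : nat) (f : nat -> R) (u : R) : (j < n)%nat ->
  Rprod_upto n (fun i => if Nat.eqb i j then u else f i)
  = u * Rprod_upto n (fun i => if Nat.eqb i j then 1 else f i).
Proof.
  induction n; intros Hj. lia. simpl.
  destruct (Nat.eq_dec j n).
  - subst. rewrite Nat.eqb_refl.
    rewrite (prod_ext n _ f), (prod_ext n (fun i => if Nat.eqb i n then 1 else f i) f). ring.
    all: intros i Hi; destruct (Nat.eqb_spec i n); auto; lia.
  - rewrite IHn by lia. destruct (Nat.eqb_spec n j); [lia|]. ring.
Qed.

Lemma forall_lt_S (n : nat) (Q : nat -> Prop) :
  (forall i, (i < S n)%nat -> Q i) <-> (forall i, (i < n)%nat -> Q i) /\ Q n.
Proof.
  split. intros H; split; auto.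
  intros [H1 H2] i Hi. destruct (Nat.eq_dec i n). subst; auto. apply H1; lia.
Qed.

Lemma meas_lits (Om : ProbSpace) (n : nat) (E : nat -> ps_car Om -> Prop) (L : nat -> option bool) :
  (forall i, (i < n)%nat -> ps_meas Om (E i)) ->
  ps_meas Om (fun w => forall i, (i < n)%nat -> lit (L i) (E i w)).
Proof.
  induction n; intros HE.
  - apply (meas_ext Om (fun _ => True)). intros w; split; auto; intros; lia. apply meas_full.
  - apply (meas_ext Om (fun w => (forall i, (i < n)%nat -> lit (L i) (E i w)) /\ lit (L n) (E n w))).
    intros w; rewrite forall_lt_S; tauto.
    apply meas_and. apply IHn; auto.
    destruct (L n) as [[|]|]; simpl. apply HE; lia. apply meas_compl, HE; lia. apply meas_full.
Qed.

Lemma cdf_meas (Om : ProbSpace) (Y : ps_car Om -> R) (c : R) :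
  random_variable Om Y -> ps_meas Om (fun w => Y w <= c).
Proof. intros H; apply H. Qed.

Lemma cdf_01 (Om : ProbSpace) (Y : ps_car Om -> R) (c : R) :
  random_variable Om Y -> 0 <= cdf Om Y c <= 1.
Proof. intros H; unfold cdf; split. apply P_nonneg, H. apply P_le1, H. Qed.

Lemma cdf_mono (Om : ProbSpace) (Y : ps_car Om -> R) (c d : R) :
  random_variable Om Y -> c <= d -> cdf Om Y c <= cdf Om Y d.
Proof. intros H Hcd; unfold cdf; apply P_mono; try apply H. intros; lra. Qed.

Lemma cdf_to1 (Om : ProbSpace) (Y : ps_car Om -> R) :
  random_variable Om Y -> Un_cv (fun M => cdf Om Y (INR M)) 1.
Proof.
  intros H. rewrite <- (P_full Om).
  rewrite (P_ext Om (fun _ => True) (fun w => exists M, Y w <= INR M)).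
  apply (P_cont_below Om (fun M w => Y w <= INR M)). intros; apply H.
  intros m w Hm; rewrite S_INR; lra.
  intros w; split; auto. intros _. destruct (INR_unbounded (Y w)) as [M HM]. exists M; lra.
Qed.

Lemma cv_const (c : R) : Un_cv (fun _ => c) c.
Proof. intros eps Heps; exists 0%nat; intros; unfold Rdist; rewrite Rminus_diag, Rabs_R0; auto. Qed.

Lemma bound_all (Om : ProbSpace) (X : nat -> ps_car Om -> R) (n : nat) (w : ps_car Om) :
  exists M : nat, forall M', (M <= M')%nat -> forall i, (i < n)%nat -> X i w <= INR M'.
Proof.
  induction n.
  - exists 0%nat; intros; lia.
  - destruct IHn as [M HM]. destruct (INR_unbounded (X n w)) as [M2 HM2].
    exists (Nat.max M M2). intros M' HM' i Hi.
    destruct (Nat.eq_dec i n). subst. apply le_INR in HM'.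
    assert (INR M2 <= INR (Nat.max M M2)) by (apply le_INR; lia). lra.
    apply HM; lia.
Qed.

Lemma indep_T (Om : ProbSpace) (n : nat) (X : nat -> ps_car Om -> R) (c : R) (T : nat -> bool) :
  (forall i, (i < n)%nat -> random_variable Om (X i)) ->
  independent Om n X ->
  ps_P Om (fun w => forall i, (i < n)%nat -> T i = true -> X i w <= c)
  = Rprod_upto n (fun i => if T i then cdf Om (X i) c else 1).
Proof.
  intros Hrv Hind.
  set (a := fun (M : nat) (i : nat) => if T i then c else INR M).
  apply (UL_sequence (fun M => ps_P Om (fun w => forall i, (i < n)%nat -> X i w <= a M i))).
  - rewrite (P_ext Om _ (fun w => exists M, forall i, (i < n)%nat -> X i w <= a M i)).
    apply (P_cont_below Om (fun M w => forall i, (i < n)%nat -> X i w <= a M i)).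
    + intros M. apply (meas_ext Om (fun w => forall i, (i < n)%nat -> lit (Some true) (X i w <= a M i))).
      intros; simpl; tauto.
      apply (meas_lits Om n (fun i w => X i w <= a M i) (fun _ => Some true)).
      intros i Hi; apply Hrv; auto.
    + intros m w H i Hi. specialize (H i Hi). unfold a in *. destruct (T i); auto. rewrite S_INR; lra.
    + intros w; split.
      * intros H. destruct (bound_all Om X n w) as [M HM]. exists M. intros i Hi. unfold a.
        destruct (T i) eqn:HT. auto. apply (HM M); auto.
      * intros [M HM] i Hi HT. specialize (HM i Hi). unfold a in HM; rewrite HT in HM; auto.
  - apply (Un_cv_ext (fun M => Rprod_upto n (fun i => cdf Om (X i) (a M i)))).
    intros M; symmetry; apply Hind.
    clear Hind. induction n.
    + simpl. apply cv_const.
    + simpl. apply CV_mult. apply IHn. intros; apply Hrv; lia.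
      unfold a. destruct (T n). apply cv_const. apply cdf_to1, Hrv; lia.
Qed.

Definition upd (L : nat -> option bool) (j : nat) (o : option bool) :=
  fun i => if Nat.eqb i j then o else L i.

Lemma indep_prodprop (Om : ProbSpace) (n : nat) (X : nat -> ps_car Om -> R) (c : R) :
  (forall i, (i < n)%nat -> random_variable Om (X i)) ->
  independent Om n X ->
  prodprop Om n (fun i w => X i w <= c) (fun i => cdf Om (X i) c).
Proof.
  intros Hrv Hind.
  assert (HE : forall i, (i < n)%nat -> ps_meas Om (fun w => X i w <= c)) by (intros; apply Hrv; auto).
  assert (Main : forall N L, (forall i, (N <= i)%nat -> (i < n)%nat -> L i <> Some false) ->
    ps_P Om (fun w => forall i, (i < n)%nat -> lit (L i) (X i w <= c))
    = Rprod_upto n (fun i => wt (L i) (cdf Om (X i) c))).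
  { induction N; intros L HL.
    - set (T := fun i => match L i with Some true => true | _ => false end).
      rewrite (P_ext Om _ (fun w => forall i, (i < n)%nat -> T i = true -> X i w <= c)).
      rewrite indep_T; auto. apply prod_ext. intros i Hi. unfold T.
      specialize (HL i ltac:(lia) Hi). destruct (L i) as [[|]|]; simpl; auto. congruence.
      intros w; split; intros H i Hi; specialize (H i Hi); specialize (HL i ltac:(lia) Hi);
        unfold T in *; destruct (L i) as [[|]|]; simpl in *; auto; try congruence.
    - destruct (Nat.lt_ge_cases N n) as [HNn|HNn].
      2:{ apply IHN. intros i Hi Hin. apply HL; lia. }
      destruct (L N) as [[|]|] eqn:HLN.
      2:{ set (L1 := upd L N None). set (L2 := upd L N (Some true)).
          assert (H1 := IHN L1). assert (H2 := IHN L2).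
          assert (HL1 : forall i, (N <= i)%nat -> (i < n)%nat -> L1 i <> Some false).
          { intros i Hi Hin; unfold L1, upd; destruct (Nat.eqb_spec i N). congruence. apply HL; lia. }
          assert (HL2 : forall i, (N <= i)%nat -> (i < n)%nat -> L2 i <> Some false).
          { intros i Hi Hin; unfold L2, upd; destruct (Nat.eqb_spec i N). congruence. apply HL; lia. }
          specialize (H1 HL1); specialize (H2 HL2).
          rewrite (P_split Om _ (fun w => X N w <= c)) in H1 by (auto; apply meas_lits; auto).
          rewrite (P_ext Om (fun w => (forall i, (i < n)%nat -> lit (L1 i) (X i w <= c)) /\ X N w <= c)
                     (fun w => forall i, (i < n)%nat -> lit (L2 i) (X i w <= c))) in H1.
          rewrite (P_ext Om (fun w => (forall i, (i < n)%nat -> lit (L1 i) (X i w <= c)) /\ ~ X N w <= c)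
                     (fun w => forall i, (i < n)%nat -> lit (L i) (X i w <= c))) in H1.
          + assert (E1 : Rprod_upto n (fun i => wt (L1 i) (cdf Om (X i) c))
                    = Rprod_upto n (fun i => if Nat.eqb i N then 1 else wt (L i) (cdf Om (X i) c))).
            { apply prod_ext; intros i Hi; unfold L1, upd; destruct (Nat.eqb i N); auto. }
            assert (E2 : Rprod_upto n (fun i => wt (L2 i) (cdf Om (X i) c))
                    = cdf Om (X N) c * Rprod_upto n (fun i => if Nat.eqb i N then 1 else wt (L i) (cdf Om (X i) c))).
            { rewrite <- prod_upd by auto. apply prod_ext; intros i Hi; unfold L2, upd;
              destruct (Nat.eqb_spec i N); subst; auto. }
            assert (E3 : Rprod_upto n (fun i => wt (L i) (cdf Om (X i) c))
                    = (1 - cdf Om (X N) c) * Rprod_upto n (fun i => if Nat.eqb i N then 1 else wt (L i) (cdf Om (X i) c))).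
            { rewrite <- prod_upd by auto. apply prod_ext; intros i Hi;
              destruct (Nat.eqb_spec i N); subst; auto. rewrite HLN; auto. }
            rewrite E3. rewrite E1, E2 in *. lra.
          + intros w; split.
            * intros [H Hx] i Hi. specialize (H i Hi). unfold L1, upd in H.
              destruct (Nat.eqb_spec i N). subst; rewrite HLN; auto. auto.
            * intros H; split. intros i Hi. unfold L1, upd. destruct (Nat.eqb_spec i N). exact I. auto.
              specialize (H N HNn). rewrite HLN in H; auto.
          + intros w; split.
            * intros [H Hx] i Hi. specialize (H i Hi). unfold L1, L2, upd in *.
              destruct (Nat.eqb_spec i N). subst; auto. auto.
            * intros H; split. intros i Hi. specialize (H i Hi). unfold L1, L2, upd in *.
              destruct (Nat.eqb_spec i N). exact I. auto.
              specialize (H N HNn). unfold L2, upd in H. rewrite Nat.eqb_refl in H; auto. }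
      all: apply IHN; intros i Hi Hin; destruct (Nat.eq_dec i N); [subst; congruence | apply HL; lia]. }
  intros L. apply (Main n). intros; lia.
Qed.

Lemma prodprop_compl (Om : ProbSpace) (n : nat) (E : nat -> ps_car Om -> Prop) (p : nat -> R) :
  prodprop Om n E p -> prodprop Om n (fun i w => ~ E i w) (fun i => 1 - p i).
Proof.
  intros H L. set (L' := fun i => option_map negb (L i)).
  rewrite (P_ext Om _ (fun w => forall i, (i < n)%nat -> lit (L' i) (E i w))).
  rewrite H. apply prod_ext. intros i Hi; unfold L'; destruct (L i) as [[|]|]; simpl; ring.
  intros w; split; intros H1 i Hi; specialize (H1 i Hi); unfold L' in *;
    destruct (L i) as [[|]|]; simpl in *; auto; apply NNPP; tauto.
Qed.

Fixpoint atl (Om : ProbSpace) (E : nat -> ps_car Om -> Prop) (s len j : nat) (w : ps_car Om) : Prop :=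
  match len, j with
  | O, O => True
  | O, S _ => False
  | S _, O => True
  | S len', S j' => (E s w /\ atl Om E (S s) len' j' w) \/ (~ E s w /\ atl Om E (S s) len' (S j') w)
  end.

Fixpoint tl (p : nat -> R) (s len j : nat) : R :=
  match len, j with
  | O, O => 1
  | O, S _ => 0
  | S _, O => 1
  | S len', S j' => p s * tl p (S s) len' j' + (1 - p s) * tl p (S s) len' (S j')
  end.

Fixpoint sumr (f : nat -> R) (s len : nat) : R :=
  match len with O => 0 | S len' => f s + sumr f (S s) len' end.

Lemma meas_atl (Om : ProbSpace) (E : nat -> ps_car Om -> Prop) (s len j : nat) :
  (forall i, (s <= i)%nat -> (i < s + len)%nat -> ps_meas Om (E i)) ->
  ps_meas Om (atl Om E s len j).
Proof.
  revert s j; induction len; intros s j HE; destruct j; simpl.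
  - apply meas_full.
  - apply meas_empty.
  - apply meas_full.
  - apply meas_or; apply meas_and.
    apply HE; lia. apply IHlen; intros; apply HE; lia.
    apply meas_compl, HE; lia. apply IHlen; intros; apply HE; lia.
Qed.

Lemma atl_prob (Om : ProbSpace) (n : nat) (E : nat -> ps_car Om -> Prop) (p : nat -> R) :
  (forall i, (i < n)%nat -> ps_meas Om (E i)) ->
  prodprop Om n E p ->
  forall len s j L, (s + len = n)%nat -> (forall i, (s <= i)%nat -> L i = None) ->
  ps_P Om (fun w => atl Om E s len j w /\ forall i, (i < n)%nat -> lit (L i) (E i w))
  = tl p s len j * Rprod_upto n (fun i => wt (L i) (p i)).
Proof.
  intros HE Hpp. induction len; intros s j L Hs HL.
  - destruct j; simpl.
    + rewrite <- Hpp. rewrite Rmult_1_l. apply P_ext; tauto.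
    + rewrite (P_ext Om _ (fun _ => False)) by tauto. rewrite P_empty; ring.
  - destruct j.
    + simpl. rewrite <- Hpp. rewrite Rmult_1_l. apply P_ext; tauto.
    + assert (Hsn : (s < n)%nat) by lia.
      assert (Hm : ps_meas Om (fun w => atl Om E s (S len) (S j) w /\ forall i, (i < n)%nat -> lit (L i) (E i w))).
      { apply meas_and. apply meas_atl; intros; apply HE; lia. apply meas_lits; auto. }
      rewrite (P_split Om _ (E s)) by (auto; apply HE; auto).
      rewrite (P_ext Om (fun w => (atl Om E s (S len) (S j) w /\ forall i, (i < n)%nat -> lit (L i) (E i w)) /\ E s w)
                  (fun w => atl Om E (S s) len j w /\ forall i, (i < n)%nat -> lit (upd L s (Some true) i) (E i w))).
      rewrite (P_ext Om (fun w => (atl Om E s (S len) (S j) w /\ forall i, (i < n)%nat -> lit (L i) (E i w)) /\ ~ E s w)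
                  (fun w => atl Om E (S s) len (S j) w /\ forall i, (i < n)%nat -> lit (upd L s (Some false) i) (E i w))).
      rewrite !IHlen by (first [lia | intros i Hi; unfold upd; destruct (Nat.eqb_spec i s); [lia | apply HL; lia]]).
      * set (Q := Rprod_upto n (fun i => if Nat.eqb i s then 1 else wt (L i) (p i))).
        assert (E1 : Rprod_upto n (fun i => wt (upd L s (Some true) i) (p i)) = p s * Q).
        { unfold Q; rewrite <- prod_upd by auto. apply prod_ext; intros i Hi; unfold upd;
          destruct (Nat.eqb_spec i s); subst; auto. }
        assert (E2 : Rprod_upto n (fun i => wt (upd L s (Some false) i) (p i)) = (1 - p s) * Q).
        { unfold Q; rewrite <- prod_upd by auto. apply prod_ext; intros i Hi; unfold upd;
          destruct (Nat.eqb_spec i s); subst; auto. }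
        assert (E3 : Rprod_upto n (fun i => wt (L i) (p i)) = Q).
        { unfold Q; apply prod_ext; intros i Hi; destruct (Nat.eqb_spec i s); subst; auto.
          rewrite HL; auto. }
        rewrite E1, E2, E3. simpl. ring.
      * intros w; split.
        -- intros [[[[H1 H2]|[H1 H2]] H3] H4]. tauto. split; auto. intros i Hi; unfold upd.
           destruct (Nat.eqb_spec i s); subst; simpl; auto.
        -- intros [H1 H2]. assert (H3 := H2 s Hsn). unfold upd in H3; rewrite Nat.eqb_refl in H3; simpl in H3.
           split; auto. split. simpl; right; auto. intros i Hi; specialize (H2 i Hi); unfold upd in H2.
           destruct (Nat.eqb_spec i s); subst; auto. rewrite HL; simpl; auto.
      * intros w; split.
        -- intros [[[[H1 H2]|[H1 H2]] H3] H4]. 2: tauto. split; auto. intros i Hi; unfold upd.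
           destruct (Nat.eqb_spec i s); subst; simpl; auto.
        -- intros [H1 H2]. assert (H3 := H2 s Hsn). unfold upd in H3; rewrite Nat.eqb_refl in H3; simpl in H3.
           split; auto. split. simpl; left; auto. intros i Hi; specialize (H2 i Hi); unfold upd in H2.
           destruct (Nat.eqb_spec i s); subst; auto. rewrite HL; simpl; auto.
Qed.

Lemma atl_prob0 (Om : ProbSpace) (n : nat) (E : nat -> ps_car Om -> Prop) (p : nat -> R) (j : nat) :
  (forall i, (i < n)%nat -> ps_meas Om (E i)) ->
  prodprop Om n E p ->
  ps_P Om (atl Om E 0 n j) = tl p 0 n j.
Proof.
  intros HE Hpp. rewrite (P_ext Om _ (fun w => atl Om E 0 n j w /\ forall i, (i < n)%nat -> lit None (E i w))).
  rewrite (atl_prob Om n E p HE Hpp n 0 j (fun _ => None)); auto.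
  replace (Rprod_upto n (fun i => wt ((fun _ : nat => @None bool) i) (p i))) with 1. ring.
  clear; induction n; cbn in *; auto. rewrite <- IHn; ring.
  intros w; simpl; split; tauto.
Qed.

Lemma exp_tangent (x y : R) : exp x * (1 + y - x) <= exp y.
Proof.
  replace y with (x + (y - x)) at 2 by ring. rewrite exp_plus.
  apply Rmult_le_compat_l. apply Rlt_le, exp_pos.
  destruct (Req_dec (y - x) 0) as [H|H]. rewrite H, exp_0; lra.
  apply Rlt_le. replace (1 + y - x) with (1 + (y - x)) by ring. apply exp_ineq1; auto.
Qed.

Lemma exp_convex01 (lam f : R) : 0 <= f <= 1 ->
  exp (- lam * f) <= 1 - f + f * exp (- lam).
Proof.
  intros Hf.
  assert (H1 := exp_tangent (- lam * f) 0). assert (H2 := exp_tangent (- lam * f) (- lam)).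
  rewrite exp_0 in H1.
  assert (H3 : (1 - f) * (exp (- lam * f) * (1 + 0 - - lam * f)) + f * (exp (- lam * f) * (1 + - lam - - lam * f))
            = exp (- lam * f)) by ring.
  assert ((1-f) * (exp (- lam * f) * (1 + 0 - - lam * f)) <= (1 - f) * 1) by (apply Rmult_le_compat_l; lra).
  assert (f * (exp (- lam * f) * (1 + - lam - - lam * f)) <= f * exp (- lam)) by (apply Rmult_le_compat_l; lra).
  lra.
Qed.

Lemma factor_bound (lam f p : R) : 0 <= lam -> 0 <= f <= 1 -> 0 <= p ->
  p * (1 - f + exp (- lam) * f) <= exp (- lam) * f ->
  1 - p + p * exp lam <= exp (lam * f).
Proof.
  intros Hl Hf Hp H.
  set (e := exp (- lam)) in *. assert (He : 0 < e) by apply exp_pos.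
  assert (Hel : exp lam = / e) by (unfold e; rewrite exp_Ropp, Rinv_inv; auto).
  assert (HD := exp_convex01 lam f Hf). fold e in HD.
  set (D := 1 - f + f * e) in *.
  assert (Hd0 : 0 < exp (- lam * f)) by apply exp_pos.
  assert (HDp : 0 < D) by lra.
  assert (Hlf : exp (lam * f) = / exp (- lam * f)).
  { rewrite <- exp_Ropp. f_equal; ring. }
  rewrite Hel, Hlf.
  apply Rle_trans with (/ D).
  - assert (Hgoal : e * D * (1 - p + p * / e) <= e).
    { replace (e * D * (1 - p + p * / e)) with (e * D - e * D * p + D * p) by (field; lra).
      assert (e <= 1) by (unfold e; rewrite <- exp_0; destruct (Req_dec lam 0);
        [subst; rewrite Ropp_0; lra | left; apply exp_increasing; lra]).
      assert (HpD : p * D <= e * f).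
      { unfold D. lra. }
      assert (0 <= (e * f - p * D) * (1 - e)).
      { apply Rmult_le_pos; lra. }
      unfold D in *. nra. }
    apply Rmult_le_reg_l with (e * D). nra.
    replace (e * D * / D) with e by (field; lra). lra.
  - apply Rinv_le_contravar; lra.
Qed.

Lemma tl_bound (p f : nat -> R) (lam : R) : 0 <= lam ->
  forall len s j,
  (forall i, (s <= i)%nat -> (i < s + len)%nat ->
     0 <= p i <= 1 /\ 0 <= f i <= 1 /\ p i * (1 - f i + exp (- lam) * f i) <= exp (- lam) * f i) ->
  tl p s len j * exp lam ^ j <= exp (lam * sumr f s len).
Proof.
  intros Hl. induction len; intros s j H; destruct j; simpl.
  - rewrite Rmult_0_r, exp_0; lra.
  - rewrite Rmult_0_l, Rmult_0_r, exp_0; lra.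
  - rewrite Rmult_1_l. rewrite <- exp_0. 
    assert (0 <= sumr f s (S len)).
    { clear IHlen. revert s H. induction len; intros s H; simpl. destruct (H s); lia || lra.
      specialize (IHlen (S s)). simpl in IHlen.
      assert (0 <= f s) by (destruct (H s); try lia; lra).
      assert (0 <= f (S s) + sumr f (S (S s)) len) by (apply IHlen; intros; apply H; lia). lra. }
    destruct (Req_dec (lam * (f s + sumr f (S s) len)) 0) as [Hz|Hz]. rewrite Hz; lra.
    left; apply exp_increasing. simpl in H0. nra.
  - destruct (H s) as [Hp [Hf Hpf]]; try lia.
    assert (IH1 := IHlen (S s) j ltac:(intros; apply H; lia)).
    assert (IH2 := IHlen (S s) (S j) ltac:(intros; apply H; lia)). simpl in IH2.
    assert (Hfb := factor_bound lam (f s) (p s) Hl Hf (proj1 Hp) Hpf).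
    set (B := exp (lam * sumr f (S s) len)) in *.
    assert (HB : 0 <= B) by (left; apply exp_pos).
    assert (Hz : 0 < exp lam) by apply exp_pos.
    replace (exp (lam * (f s + sumr f (S s) len))) with (exp (lam * f s) * B)
      by (unfold B; rewrite <- exp_plus; f_equal; ring).
    replace ((p s * tl p (S s) len j + (1 - p s) * tl p (S s) len (S j)) * (exp lam * exp lam ^ j))
      with (p s * exp lam * (tl p (S s) len j * exp lam ^ j) + (1 - p s) * (tl p (S s) len (S j) * (exp lam * exp lam ^ j))) by ring.
    apply Rle_trans with (p s * exp lam * B + (1 - p s) * B).
    + apply Rplus_le_compat; apply Rmult_le_compat_l; auto. nra. lra.
    + replace (p s * exp lam * B + (1 - p s) * B) with ((1 - p s + p s * exp lam) * B) by ring.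
      apply Rmult_le_compat_r; auto.
Qed.

Lemma exp_pow (x : R) (j : nat) : exp x ^ j = exp (INR j * x).
Proof.
  induction j; simpl. rewrite Rmult_0_l, exp_0; auto.
  rewrite IHj, <- exp_plus. f_equal. destruct j; simpl; ring.
Qed.

Lemma sumr_Rsum (f : nat -> R) (len : nat) : sumr f 0 len = Rsum_upto len f.
Proof.
  assert (G : forall s, sumr f s len = Rsum_upto len (fun i => f (s + i)%nat)).
  { induction len; intros s; simpl; auto. rewrite IHlen.
    clear IHlen. revert s; induction len; intros s; simpl. rewrite Nat.add_0_r; ring.
    rewrite <- IHlen. rewrite Nat.add_succ_r. simpl. ring. }
  rewrite G. apply sum_ext; auto.
Qed.

Lemma tail_final (p f : nat -> R) (lam : R) (n k : nat) : 0 <= lam ->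
  (forall i, (i < n)%nat ->
     0 <= p i <= 1 /\ 0 <= f i <= 1 /\ p i * (1 - f i + exp (- lam) * f i) <= exp (- lam) * f i) ->
  Rsum_upto n f <= INR k - 1/2 ->
  tl p 0 n k <= exp (- lam / 2).
Proof.
  intros Hl H Hs.
  assert (Hb := tl_bound p f lam Hl n 0 k ltac:(intros; apply H; lia)).
  rewrite sumr_Rsum, exp_pow in Hb.
  assert (exp (lam * Rsum_upto n f) <= exp (lam * (INR k - 1/2))).
  { destruct (Req_dec (lam * Rsum_upto n f) (lam * (INR k - 1/2))) as [E|E]. rewrite E; lra.
    left; apply exp_increasing. nra. }
  replace (exp (lam * (INR k - 1/2))) with (exp (INR k * lam) * exp (- lam / 2)) in H0
    by (rewrite <- exp_plus; f_equal; field).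
  assert (0 < exp (INR k * lam)) by apply exp_pos.
  assert (tl p 0 n k * exp (INR k * lam) <= exp (INR k * lam) * exp (- lam / 2)) by lra.
  nra.
Qed.

Fixpoint cle (c : R) (l : list R) : nat :=
  match l with nil => O | x :: l' => ((if Rle_dec x c then 1 else 0) + cle c l')%nat end.

Fixpoint sortedR (l : list R) : Prop :=
  match l with nil => True | x :: l' => (forall y, In y l' -> x <= y) /\ sortedR l' end.

Lemma ins_In (x y : R) (l : list R) : In y (insert_sorted x l) <-> x = y \/ In y l.
Proof.
  induction l; simpl. tauto. destruct (Rle_dec x a); simpl. tauto. rewrite IHl. tauto.
Qed.

Lemma ins_sorted (x : R) (l : list R) : sortedR l -> sortedR (insert_sorted x l).
Proof.
  induction l; simpl; intros H. split; auto; tauto.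
  destruct H as [H1 H2]. destruct (Rle_dec x a); simpl.
  - split. intros y [->|Hy]. auto. specialize (H1 y Hy); lra. split; auto.
  - split. intros y Hy. apply ins_In in Hy. destruct Hy as [<-|Hy]. lra. auto. auto.
Qed.

Lemma ins_cle (c x : R) (l : list R) : cle c (insert_sorted x l) = ((if Rle_dec x c then 1 else 0) + cle c l)%nat.
Proof.
  induction l; simpl; auto. destruct (Rle_dec x a); simpl; auto. rewrite IHl. lia.
Qed.

Lemma ins_len (x : R) (l : list R) : length (insert_sorted x l) = S (length l).
Proof. induction l; simpl; auto. destruct (Rle_dec x a); simpl; auto. Qed.

Lemma isort_props (c : R) (l : list R) :
  sortedR (isort l) /\ cle c (isort l) = cle c l /\ length (isort l) = length l
  /\ (forall y, In y (isort l) -> In y l).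
Proof.
  induction l; simpl. repeat split; auto.
  destruct IHl as [H1 [H2 [H3 H4]]]. repeat split.
  apply ins_sorted; auto. rewrite ins_cle, H2; auto. rewrite ins_len; auto.
  intros y Hy. apply ins_In in Hy. destruct Hy; auto.
Qed.

Lemma sorted_nth (c : R) (l : list R) : sortedR l ->
  forall j, (j < length l)%nat -> (nth j l 0 <= c <-> (j < cle c l)%nat).
Proof.
  induction l; simpl; intros Hs j Hj. lia. destruct Hs as [H1 H2].
  destruct (Rle_dec a c).
  - destruct j. split; intros; auto; lia. rewrite IHl by (auto; lia). lia.
  - assert (Hz : cle c l = 0%nat).
    { clear IHl H2 Hj j. induction l; simpl; auto. destruct (Rle_dec a0 c).
      exfalso; assert (a <= a0) by (apply H1; simpl; auto). lra.
      simpl. apply IHl. intros; apply H1; simpl; auto. }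
    rewrite Hz. simpl. split; [|lia]. intros Hc. exfalso. destruct j. lra.
    assert (a <= nth j l 0) by (apply H1, nth_In; lia). lra.
Qed.

Lemma kmin_le (c : R) (k : nat) (l : list R) : (1 <= k)%nat -> (k <= length l)%nat ->
  (kmin k l <= c <-> (k <= cle c l)%nat).
Proof.
  intros H1 H2. destruct (isort_props c l) as [Hs [Hc [Hl _]]]. unfold kmin.
  rewrite sorted_nth by (auto; lia). rewrite Hc; lia.
Qed.

Lemma kmin_nonneg (k : nat) (l : list R) : (forall y, In y l -> 0 <= y) -> 0 <= kmin k l.
Proof.
  intros H. destruct (isort_props 0 l) as [_ [_ [_ H4]]]. unfold kmin.
  destruct (nth_in_or_default (k - 1) (isort l) 0) as [Hi|Hd]. apply H, H4; auto. rewrite Hd; lra.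
Qed.

Fixpoint cntr (Om : ProbSpace) (X : nat -> ps_car Om -> R) (c : R) (w : ps_car Om) (s len : nat) : nat :=
  match len with O => O | S len' => ((if Rle_dec (X s w) c then 1 else 0) + cntr Om X c w (S s) len')%nat end.

Lemma cle_cntr (Om : ProbSpace) (X : nat -> ps_car Om -> R) (c : R) (w : ps_car Om) (s len : nat) :
  cle c (map (fun i => X i w) (seq s len)) = cntr Om X c w s len.
Proof. revert s; induction len; intros s; simpl; auto. Qed.

Lemma cntr_le (Om : ProbSpace) (X : nat -> ps_car Om -> R) (c : R) (w : ps_car Om) (s len : nat) :
  (cntr Om X c w s len <= len)%nat.
Proof. revert s; induction len; intros s; simpl; auto. specialize (IHlen (S s)). destruct (Rle_dec (X s w) c); lia. Qed.

Lemma atl_le (Om : ProbSpace) (X : nat -> ps_car Om -> R) (c : R) (w : ps_car Om) (len : nat) :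
  forall s j, atl Om (fun i w => X i w <= c) s len j w <-> (j <= cntr Om X c w s len)%nat.
Proof.
  induction len; intros s j; destruct j; simpl; try (split; intros; auto; lia).
  destruct (Rle_dec (X s w) c).
  - rewrite !IHlen. split. intros [[_ H]|[H _]]. lia. tauto. intros H; left; split; auto. lia.
  - rewrite !IHlen. split. intros [[H _]|[_ H]]. tauto. lia. intros H; right; split; auto.
Qed.

Lemma atl_gt (Om : ProbSpace) (X : nat -> ps_car Om -> R) (c : R) (w : ps_car Om) (len : nat) :
  forall s j, atl Om (fun i w => ~ X i w <= c) s len j w <-> (j + cntr Om X c w s len <= len)%nat.
Proof.
  induction len as [|len IHlen]; intros s j. destruct j; simpl; split; intros; auto; lia.
  assert (Hc0 := cntr_le Om X c w s (S len)); destruct j; simpl in *; try (split; intros; auto; lia).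
  assert (Hc := cntr_le Om X c w (S s) len).
  destruct (Rle_dec (X s w) c).
  - rewrite !IHlen. split. intros [[H _]|[_ H]]. tauto. lia. intros H; right; split; [tauto | lia].
  - rewrite !IHlen. split. intros [[_ H]|[H _]]. lia. tauto. intros H; left; split; [tauto | lia].
Qed.

Lemma ext_le_trans (x y z : option R) : ext_le x y -> ext_le y z -> ext_le x z.
Proof. destruct x, y, z; simpl; auto; try lra; tauto. Qed.

Lemma scale_mono (a : R) (x y : option R) : 0 <= a -> ext_le x y -> ext_le (ext_scale a x) (ext_scale a y).
Proof. destruct x, y; simpl; auto. intros; apply Rmult_le_compat_l; auto. Qed.

Lemma scale_comp (a b : R) (x : option R) : ext_scale a (ext_scale b x) = ext_scale (a * b) x.
Proof. destruct x; simpl; auto. f_equal; ring. Qed.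

Lemma condC_iter (F : R -> R) (K : R) : 0 < K -> condC F K ->
  forall m s, 0 < s -> ext_le (ext_scale (2 ^ m) (odds (F s))) (odds (F (K ^ m * s))).
Proof.
  intros HK HC m. induction m; intros s Hs.
  - simpl. rewrite Rmult_1_l. destruct (odds (F s)); simpl; auto. lra.
  - simpl pow. rewrite <- scale_comp. rewrite Rmult_assoc.
    apply ext_le_trans with (ext_scale 2 (odds (F (K ^ m * s)))).
    apply scale_mono. lra. auto.
    apply HC. apply Rmult_lt_0_compat; auto. apply pow_lt; auto.
Qed.

Lemma odds_ineq (a b : R) (m : nat) : 0 <= a <= 1 -> 0 <= b <= 1 ->
  ext_le (ext_scale (2 ^ m) (odds a)) (odds b) -> a * (1 - b + / 2 ^ m * b) <= / 2 ^ m * b.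
Proof.
  intros Ha Hb H. assert (Hm : 0 < 2 ^ m) by (apply pow_lt; lra).
  set (e := / 2 ^ m). assert (He : 0 < e) by (apply Rinv_0_lt_compat; auto).
  assert (He2 : e * 2 ^ m = 1) by (unfold e; field; lra).
  unfold odds in H. destruct (Req_EM_T b 1) as [Hb1|Hb1].
  - subst b. replace (a * (1 - 1 + e * 1)) with (a * e) by ring. nra.
  - destruct (Req_EM_T a 1) as [Ha1|Ha1]; simpl in H. contradiction.
    assert (Ha' : a < 1) by lra. assert (Hb' : b < 1) by lra.
    assert (H2 : 2 ^ m * a * (1 - b) <= b * (1 - a)).
    { replace (2 ^ m * a * (1 - b)) with ((2 ^ m * (a / (1 - a))) * ((1 - a) * (1 - b))) by (field; lra).
      replace (b * (1 - a)) with ((b / (1 - b)) * ((1 - a) * (1 - b))) by (field; lra).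
      apply Rmult_le_compat_r; auto. nra. }
    assert (H3 : a * (1 - b) <= e * b * (1 - a)).
    { assert (e * (2 ^ m * a * (1 - b)) <= e * (b * (1 - a))) by (apply Rmult_le_compat_l; lra).
      assert (e * (2 ^ m * a * (1 - b)) = a * (1 - b)) by (transitivity ((e * 2 ^ m) * a * (1 - b)); [ring | rewrite He2; ring]).
      lra. }
    nra.
Qed.

Lemma exp_m_ln2 (m : nat) : exp (- (INR m * ln 2)) = / 2 ^ m.
Proof. rewrite exp_Ropp, <- ln_pow, exp_ln; auto; try lra. apply pow_lt; lra. Qed.

Lemma ln2_pos : 0 < ln 2.
Proof. assert (H := ln_lt_2). lra. Qed.

Definition Yof (Om : ProbSpace) (X : nat -> ps_car Om -> R) (k n : nat) (w : ps_car Om) :=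
  kmin k (map (fun i => X i w) (seq 0 n)).

Lemma Yle_iff (Om : ProbSpace) (X : nat -> ps_car Om -> R) (k n : nat) (c : R) (w : ps_car Om) :
  (1 <= k)%nat -> (k <= n)%nat ->
  (Yof Om X k n w <= c <-> atl Om (fun i w => X i w <= c) 0 n k w).
Proof.
  intros H1 H2. unfold Yof. rewrite kmin_le; auto. rewrite cle_cntr, atl_le. tauto.
  rewrite length_map, length_seq; auto.
Qed.

Lemma Ygt_iff (Om : ProbSpace) (X : nat -> ps_car Om -> R) (k n : nat) (c : R) (w : ps_car Om) :
  (1 <= k)%nat -> (k <= n)%nat ->
  (~ Yof Om X k n w <= c <-> atl Om (fun i w => ~ X i w <= c) 0 n (n - k + 1) w).
Proof.
  intros H1 H2. unfold Yof. rewrite kmin_le; auto. rewrite cle_cntr, atl_gt.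
  assert (Hc := cntr_le Om X c w 0 n). lia.
  rewrite length_map, length_seq; auto.
Qed.

Lemma meas_Yle (Om : ProbSpace) (X : nat -> ps_car Om -> R) (k n : nat) (c : R) :
  (1 <= k)%nat -> (k <= n)%nat -> (forall i, (i < n)%nat -> random_variable Om (X i)) ->
  ps_meas Om (fun w => Yof Om X k n w <= c).
Proof.
  intros H1 H2 Hrv. apply (meas_ext Om (atl Om (fun i w => X i w <= c) 0 n k)).
  intros w; rewrite Yle_iff; tauto. apply meas_atl. intros; apply Hrv; lia.
Qed.

Lemma meas_Ylt (Om : ProbSpace) (X : nat -> ps_car Om -> R) (k n : nat) (c : R) :
  (1 <= k)%nat -> (k <= n)%nat -> (forall i, (i < n)%nat -> random_variable Om (X i)) ->
  ps_meas Om (fun w => Yof Om X k n w < c).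
Proof.
  intros H1 H2 Hrv. apply (meas_ext Om (fun w => exists M : nat, Yof Om X k n w <= c - / (INR M + 1))).
  - intros w; split.
    + intros [M HM]. assert (0 < / (INR M + 1)) by (apply Rinv_0_lt_compat; assert (0 <= INR M) by apply pos_INR; lra). lra.
    + intros H. destruct (INR_unbounded (/ (c - Yof Om X k n w))) as [M HM]. exists M.
      assert (Hp : 0 < c - Yof Om X k n w) by lra.
      assert (0 <= INR M) by apply pos_INR.
      assert (/ (INR M + 1) <= c - Yof Om X k n w).
      { replace (c - Yof Om X k n w) with (/ / (c - Yof Om X k n w)) by (field; lra).
        apply Rinv_le_contravar. apply Rinv_0_lt_compat; auto. lra. }
      lra.
  - apply meas_union. intros M. apply meas_Yle; auto.
Qed.

Lemma lower_core (Om : ProbSpace) (X : nat -> ps_car Om -> R) (K : R) (k n : nat) (c : R) (m : nat) :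
  1 < K -> (1 <= k)%nat -> (k <= n)%nat ->
  (forall i, (i < n)%nat -> random_variable Om (X i)) ->
  independent Om n X ->
  (forall i, (i < n)%nat -> condC (cdf Om (X i)) K) ->
  0 < c ->
  Rsum_upto n (fun i => cdf Om (X i) (K ^ m * c)) <= INR k - 1/2 ->
  ps_P Om (fun w => Yof Om X k n w <= c) <= exp (- (INR m * ln 2) / 2).
Proof.
  intros HK Hk1 Hkn Hrv Hind HC Hc Hs.
  rewrite (P_ext Om _ (atl Om (fun i w => X i w <= c) 0 n k)) by (intros w; apply Yle_iff; auto).
  rewrite (atl_prob0 Om n _ (fun i => cdf Om (X i) c) k).
  - apply (tail_final _ (fun i => cdf Om (X i) (K ^ m * c)) (INR m * ln 2) n k); auto.
    + assert (0 <= INR m) by apply pos_INR. assert (Hl2 := ln2_pos). nra.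
    + intros i Hi. rewrite exp_m_ln2. split; [|split]; try (apply cdf_01; auto).
      apply odds_ineq; try (apply cdf_01; auto). apply condC_iter; auto; lra.
  - intros i Hi; apply Hrv; auto.
  - apply indep_prodprop; auto.
Qed.

Lemma sum_one_minus (n : nat) (g : nat -> R) : Rsum_upto n (fun i => 1 - g i) = INR n - Rsum_upto n g.
Proof. induction n; simpl Rsum_upto. simpl; ring. rewrite IHn, S_INR; ring. Qed.

Lemma upper_core (Om : ProbSpace) (X : nat -> ps_car Om -> R) (K : R) (k n : nat) (s c : R) (m : nat) :
  1 < K -> (1 <= k)%nat -> (k <= n)%nat ->
  (forall i, (i < n)%nat -> random_variable Om (X i)) ->
  independent Om n X ->
  (forall i, (i < n)%nat -> condC (cdf Om (X i)) K) ->
  0 < s -> K ^ m * s <= c ->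
  INR k - 1/2 <= Rsum_upto n (fun i => cdf Om (X i) s) ->
  ps_P Om (fun w => ~ Yof Om X k n w <= c) <= exp (- (INR m * ln 2) / 2).
Proof.
  intros HK Hk1 Hkn Hrv Hind HC Hs Hsc Hsum.
  rewrite (P_ext Om _ (atl Om (fun i w => ~ X i w <= c) 0 n (n - k + 1))) by (intros w; apply Ygt_iff; auto).
  rewrite (atl_prob0 Om n _ (fun i => 1 - cdf Om (X i) c) (n - k + 1)).
  - apply (tail_final _ (fun i => 1 - cdf Om (X i) s) (INR m * ln 2) n (n - k + 1)); auto.
    + assert (0 <= INR m) by apply pos_INR. assert (Hl2 := ln2_pos). nra.
    + intros i Hi. rewrite exp_m_ln2.
      assert (Hs1 := cdf_01 Om (X i) s (Hrv i Hi)).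
      assert (Hc1 := cdf_01 Om (X i) c (Hrv i Hi)).
      assert (Hg1 := cdf_01 Om (X i) (K ^ m * s) (Hrv i Hi)).
      assert (Hmono := cdf_mono Om (X i) (K ^ m * s) c (Hrv i Hi) Hsc).
      assert (Ho := odds_ineq _ _ m Hs1 Hg1 (condC_iter _ K ltac:(lra) (HC i Hi) m s Hs)).
      assert (Hm : 0 < 2 ^ m) by (apply pow_lt; lra).
      assert (He : 0 < / 2 ^ m) by (apply Rinv_0_lt_compat; auto).
      set (e := / 2 ^ m) in *. set (a := cdf Om (X i) s) in *. set (b := cdf Om (X i) (K ^ m * s)) in *.
      set (P := cdf Om (X i) c) in *.
      split; [lra | split; [lra|]].
      assert (H1 : (1 - b) * (a + e - e * a) <= e - e * a) by nra.
      assert (0 <= a + e - e * a) by nra.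
      assert ((1 - P) * (a + e - e * a) <= (1 - b) * (a + e - e * a)) by (apply Rmult_le_compat_r; lra).
      replace ((1 - P) * (1 - (1 - a) + e * (1 - a))) with ((1 - P) * (a + e - e * a)) by ring.
      lra.
    + rewrite sum_one_minus.
      assert (INR (n - k + 1) = INR n - INR k + 1).
      { rewrite plus_INR, minus_INR by lia. simpl; ring. }
      lra.
  - intros i Hi; apply meas_compl, Hrv; auto.
  - apply (prodprop_compl Om n (fun i w => X i w <= c)). apply indep_prodprop; auto.
Qed.

Lemma exp_le (x y : R) : x <= y -> exp x <= exp y.
Proof. intros H; destruct (Req_dec x y). subst; lra. left; apply exp_increasing; lra. Qed.

Lemma ln_le' (x y : R) : 0 < x -> x <= y -> ln x <= ln y.
Proof. intros H H1; destruct (Req_dec x y). subst; lra. left; apply ln_increasing; lra. Qed.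

Lemma pow_big (K b : R) : 1 < K -> exists N : nat, b < K ^ N.
Proof.
  intros HK. destruct (Pow_x_infinity K ltac:(rewrite Rabs_right; lra) (b + 1)) as [N HN].
  exists N. specialize (HN N (le_n N)). rewrite Rabs_right in HN. lra.
  apply Rle_ge, pow_le; lra.
Qed.

Lemma find_m_low (K t : R) : 1 < K -> 0 < t -> t < 1 ->
  exists m : nat, K ^ m * t < 1 /\ 1 <= K ^ (S m) * t.
Proof.
  intros HK Ht Ht1. destruct (pow_big K (/ t) HK) as [N HN].
  assert (HN' : 1 <= K ^ N * t).
  { apply Rmult_lt_compat_r with (r := t) in HN; auto. rewrite Rinv_l in HN; lra. }
  clear HN. induction N. simpl in HN'. lra.
  destruct (Rlt_or_le (K ^ N * t) 1). exists N; auto. apply IHN; auto.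
Qed.

Lemma find_m_up (K t : R) : 1 < K -> 1 <= t ->
  exists m : nat, K ^ m <= t /\ t < K ^ (S m).
Proof.
  intros HK Ht. destruct (pow_big K t HK) as [N HN].
  induction N. simpl in HN. lra.
  destruct (Rle_or_lt (K ^ N) t). exists N; auto. apply IHN; auto.
Qed.

Lemma num_low (K t : R) (m : nat) : 1 < K -> 0 < t -> 1 <= K ^ (S m) * t ->
  exp (- (INR m * ln 2) / 2) <= 4 * Rpower t (1 / (4 * ln K)).
Proof.
  intros HK Ht H. unfold Rpower.
  assert (HlK : 0 < ln K) by (rewrite <- ln_1; apply ln_increasing; lra).
  assert (HKp : 0 < K ^ S m) by (apply pow_lt; lra).
  assert (Hl : 0 <= ln (K ^ S m * t)) by (rewrite <- ln_1; apply ln_le'; lra).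
  rewrite ln_mult, ln_pow in Hl by lra.
  assert (H1 : - (INR (S m)) / 4 <= 1 / (4 * ln K) * ln t).
  { apply Rmult_le_reg_l with (4 * ln K). lra.
    replace (4 * ln K * (1 / (4 * ln K) * ln t)) with (ln t) by (field; lra).
    replace (4 * ln K * (- INR (S m) / 4)) with (- (INR (S m) * ln K)) by field. lra. }
  rewrite S_INR in H1.
  assert (Hl2 := ln_lt_2). assert (0 <= INR m) by apply pos_INR.
  apply Rle_trans with (exp (- INR m / 4)). apply exp_le. nra.
  replace (- INR m / 4) with ((- (INR m + 1) / 4) + 1/4) by field. rewrite exp_plus.
  assert (exp (1/4) <= 4).
  { apply Rle_trans with (exp 1). apply exp_le; lra. assert (H3 := exp_le_3). lra. }
  assert (exp (- (INR m + 1) / 4) <= exp (1 / (4 * ln K) * ln t)) by (apply exp_le; lra).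
  assert (0 < exp (- (INR m + 1) / 4)) by apply exp_pos.
  nra.
Qed.

Lemma num_up (K t : R) (m : nat) : 1 < K -> 0 < t -> t < K ^ (S m) ->
  exp (- (INR m * ln 2) / 2) <= 4 * Rpower t (- (1 / (6 * ln K))).
Proof.
  intros HK Ht H. unfold Rpower.
  assert (HlK : 0 < ln K) by (rewrite <- ln_1; apply ln_increasing; lra).
  assert (Hl : ln t <= ln (K ^ S m)) by (apply ln_le'; lra).
  rewrite ln_pow in Hl by lra.
  assert (H1 : - (INR (S m)) / 6 <= - (1 / (6 * ln K)) * ln t).
  { apply Rmult_le_reg_l with (6 * ln K). lra.
    replace (6 * ln K * (- (1 / (6 * ln K)) * ln t)) with (- ln t) by (field; lra).
    replace (6 * ln K * (- INR (S m) / 6)) with (- (INR (S m) * ln K)) by field. lra. }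
  rewrite S_INR in H1.
  assert (Hl2 := ln_lt_2). assert (0 <= INR m) by apply pos_INR.
  apply Rle_trans with (exp (- INR m / 6)). apply exp_le. nra.
  replace (- INR m / 6) with ((- (INR m + 1) / 6) + 1/6) by field. rewrite exp_plus.
  assert (exp (1/6) <= 4).
  { apply Rle_trans with (exp 1). apply exp_le; lra. assert (H3 := exp_le_3). lra. }
  assert (exp (- (INR m + 1) / 6) <= exp (- (1 / (6 * ln K)) * ln t)) by (apply exp_le; lra).
  assert (0 < exp (- (INR m + 1) / 6)) by apply exp_pos.
  nra.
Qed.

Lemma B_small (m : nat) : (9 <= m)%nat -> exp (- (INR m * ln 2) / 2) < 1/2.
Proof.
  intros Hm. apply le_INR in Hm. simpl in Hm.
  assert (Hl2 := ln_lt_2).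
  assert (H1 : 1 < INR m * ln 2 / 2) by nra.
  assert (H2 := exp_ineq1 (INR m * ln 2 / 2) ltac:(lra)).
  replace (- (INR m * ln 2) / 2) with (- (INR m * ln 2 / 2)) by field.
  rewrite exp_Ropp. assert (0 < exp (INR m * ln 2 / 2)) by apply exp_pos.
  apply Rmult_lt_reg_l with (exp (INR m * ln 2 / 2)); auto.
  rewrite Rinv_r by lra. lra.
Qed.

Lemma sum_le (n : nat) (f g : nat -> R) : (forall i, (i < n)%nat -> f i <= g i) -> Rsum_upto n f <= Rsum_upto n g.
Proof. induction n; intros H; simpl. lra. assert (f n <= g n) by (apply H; lia). assert (Rsum_upto n f <= Rsum_upto n g) by (apply IHn; intros; apply H; lia). lra. Qed.

Theorem theorem3p1 (K : R) (k n : nat) (Om : ProbSpace) (X : nat -> ps_car Om -> R)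
  (q : R) :
  1 < K -> (1 <= k)%nat -> (k <= n)%nat ->
  (forall i, (i < n)%nat -> random_variable Om (X i)) ->
  (forall i w, (i < n)%nat -> 0 <= X i w) ->
  independent Om n X ->
  (forall i, (i < n)%nat -> condC (cdf Om (X i)) K) ->
  is_quantile (fun s => / INR n * Rsum_upto n (fun i => cdf Om (X i) s))
              ((INR k - 1/2) / INR n) q ->
  let Y := fun w => kmin k (map (fun i => X i w) (seq 0 n)) in
  (forall t, 0 < t -> t < / K ^ 5 ->
     ps_P Om (fun w => Y w < t * q) <= 4 * Rpower t (1 / (4 * ln K))) /\
  (forall t, K ^ 5 < t ->
     ps_P Om (fun w => Y w > t * q) <= 4 * Rpower t (- (1 / (6 * ln K)))) /\
  (forall M, is_median Om Y M -> / K ^ 10 * q <= M /\ M <= K ^ 13 * q).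
Proof.
  intros HK Hk1 Hkn Hrv Hnn Hind HC [Hq1 Hq2] Y.
  assert (HY : forall w, Y w = Yof Om X k n w) by reflexivity.
  assert (Hn : 0 < INR n) by (apply lt_0_INR; lia).
  assert (Hk : 1 <= INR k) by (apply (le_INR 1); auto).
  assert (Hslt : forall s, s < q -> Rsum_upto n (fun i => cdf Om (X i) s) <= INR k - 1/2).
  { intros s Hs. specialize (Hq1 s Hs). cbv beta in Hq1.
    apply Rmult_le_compat_l with (r := INR n) in Hq1; [|lra].
    replace (INR n * (/ INR n * Rsum_upto n (fun i => cdf Om (X i) s))) with (Rsum_upto n (fun i => cdf Om (X i) s)) in Hq1 by (field; lra).
    replace (INR n * ((INR k - 1/2) / INR n)) with (INR k - 1/2) in Hq1 by (field; lra). auto. }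
  assert (Hsq : INR k - 1/2 <= Rsum_upto n (fun i => cdf Om (X i) q)).
  { cbv beta in Hq2. apply Rmult_le_compat_l with (r := INR n) in Hq2; [|lra].
    replace (INR n * (/ INR n * Rsum_upto n (fun i => cdf Om (X i) q))) with (Rsum_upto n (fun i => cdf Om (X i) q)) in Hq2 by (field; lra).
    replace (INR n * ((INR k - 1/2) / INR n)) with (INR k - 1/2) in Hq2 by (field; lra). auto. }
  assert (HY0 : forall w, 0 <= Yof Om X k n w).
  { intros w; apply kmin_nonneg. intros y Hy. apply in_map_iff in Hy. destruct Hy as [i [<- Hi]].
    apply in_seq in Hi. apply Hnn; lia. }
  assert (Hq0 : 0 <= q).
  { destruct (Rle_or_lt 0 q) as [|Hq]; auto. exfalso.
    assert (Rsum_upto n (fun i => cdf Om (X i) q) = 0).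
    { transitivity (Rsum_upto n (fun _ => 0)). apply sum_ext. intros i Hi. unfold cdf.
      rewrite (P_ext Om _ (fun _ => False)). apply P_empty. intros w; split; [|tauto].
      intros Hw; assert (H0 := Hnn i w Hi); lra.
      clear; induction n; simpl; auto. rewrite IHn; ring. }
    lra. }
  assert (HKp : forall m, 0 < K ^ m) by (intros; apply pow_lt; lra).
  set (B := fun m : nat => exp (- (INR m * ln 2) / 2)).
  assert (LOW : forall m c, 0 < c -> K ^ m * c < q -> ps_P Om (fun w => Yof Om X k n w <= c) <= B m).
  { intros m c Hc Hmc. apply lower_core with K; auto. }
  assert (UPQ : forall m, ps_P Om (fun w => ~ Yof Om X k n w <= K ^ m * q) <= B m).
  { intros m. destruct (Req_dec q 0) as [Hq0'|Hq0'].
    - subst q. rewrite Rmult_0_r.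
      set (A := fun (M : nat) w => ~ Yof Om X k n w <= / (INR M + 1)).
      assert (Hcv := P_cont_below Om A).
      rewrite (P_ext Om (fun w => exists M, A M w) (fun w => ~ Yof Om X k n w <= 0)) in Hcv.
      + apply (Rle_cv_lim (Un := fun M => ps_P Om (A M)) (Vn := fun _ => B m)).
        * intros M. unfold A. apply upper_core with K (/ (INR M + 1) / K ^ m); auto.
          assert (0 <= INR M) by apply pos_INR. apply Rdiv_lt_0_compat; auto.
          apply Rinv_0_lt_compat; lra.
          right. assert (0 < K ^ m) by auto. assert (0 <= INR M) by apply pos_INR. field; try split; lra.
          apply Rle_trans with (Rsum_upto n (fun i => cdf Om (X i) 0)); auto.
          apply sum_le. intros i Hi. apply cdf_mono; auto.
          assert (0 <= INR M) by apply pos_INR. apply Rlt_le, Rdiv_lt_0_compat; auto.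
          apply Rinv_0_lt_compat; lra.
        * apply Hcv. intros M; apply meas_compl, meas_Yle; auto.
          intros M w HM. unfold A in *. intros H1; apply HM.
          apply Rle_trans with (/ (INR (S M) + 1)); auto. rewrite S_INR.
          assert (0 <= INR M) by apply pos_INR. apply Rinv_le_contravar; lra.
        * apply cv_const.
      + intros w; split.
        * intros [M HM] H1. apply HM. assert (0 <= INR M) by apply pos_INR.
          assert (0 < / (INR M + 1)) by (apply Rinv_0_lt_compat; lra). lra.
        * intros H1. assert (Hp : 0 < Yof Om X k n w) by (assert (H2 := HY0 w); lra).
          destruct (INR_unbounded (/ Yof Om X k n w)) as [M HM]. exists M. unfold A.
          assert (0 <= INR M) by apply pos_INR.
          assert (/ (INR M + 1) < Yof Om X k n w).
          { replace (Yof Om X k n w) with (/ / Yof Om X k n w) by (field; lra).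
            apply Rinv_lt_contravar. apply Rmult_lt_0_compat. apply Rinv_0_lt_compat; auto. lra. lra. }
          lra.
    - apply upper_core with K q; auto. lra. lra. }
  split; [|split].
  -
    intros t Ht Ht5.
    assert (HK5 : 1 < K ^ 5) by (apply Rlt_pow_R1; auto; lia).
    assert (Ht1 : t < 1).
    { apply Rlt_le_trans with (/ K ^ 5); auto. rewrite <- Rinv_1. apply Rinv_le_contravar; lra. }
    destruct (Req_dec q 0) as [Hqz|Hqz].
    + rewrite (P_ext Om _ (fun _ => False)). rewrite P_empty.
      unfold Rpower. assert (0 < exp (1 / (4 * ln K) * ln t)) by apply exp_pos. lra.
      intros w; rewrite HY; split; [|tauto]. rewrite Hqz, Rmult_0_r. assert (H0 := HY0 w). lra.
    + destruct (find_m_low K t HK Ht Ht1) as [m [Hm1 Hm2]].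
      apply Rle_trans with (B m); [|apply num_low; auto].
      apply Rle_trans with (ps_P Om (fun w => Yof Om X k n w <= t * q)).
      * rewrite (P_ext Om (fun w => Y w < t * q) (fun w => Yof Om X k n w < t * q)) by (intros; rewrite HY; tauto).
        apply P_mono. apply meas_Ylt; auto. apply meas_Yle; auto. intros; lra.
      * apply LOW. apply Rmult_lt_0_compat; lra.
        replace (K ^ m * (t * q)) with ((K ^ m * t) * q) by ring.
        assert (0 < q) by lra. nra.
  -
    intros t Ht5.
    assert (HK5 : 1 < K ^ 5) by (apply Rlt_pow_R1; auto; lia).
    destruct (find_m_up K t HK ltac:(lra)) as [m [Hm1 Hm2]].
    apply Rle_trans with (B m); [|apply num_up; auto; lra].
    apply Rle_trans with (ps_P Om (fun w => ~ Yof Om X k n w <= K ^ m * q)); auto.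
    rewrite (P_ext Om (fun w => Y w > t * q) (fun w => ~ Yof Om X k n w <= t * q)) by (intros; rewrite HY; split; lra).
    apply P_mono; try (apply meas_compl, meas_Yle; auto).
    intros w H1 H2. apply H1. assert (K ^ m * q <= t * q) by (apply Rmult_le_compat_r; auto). lra.
  -
    intros M [HM1 HM2].
    rewrite (P_ext Om (fun w => Y w <= M) (fun w => Yof Om X k n w <= M)) in HM1 by (intros; rewrite HY; tauto).
    rewrite (P_ext Om (fun w => M <= Y w) (fun w => ~ Yof Om X k n w < M)) in HM2 by (intros; rewrite HY; split; lra).
    split.
    + destruct (Rle_or_lt (/ K ^ 10 * q) M) as [|HMl]; auto. exfalso.
      destruct (Req_dec q 0) as [Hqz|Hqz].
      * rewrite Hqz, Rmult_0_r in HMl.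
        rewrite (P_ext Om _ (fun _ => False)) in HM1. rewrite P_empty in HM1. lra.
        intros w; split; [|tauto]. assert (H0 := HY0 w). lra.
      * assert (Hqp : 0 < q) by lra.
        assert (Hc : 0 < / K ^ 10 * q) by (apply Rmult_lt_0_compat; auto; apply Rinv_0_lt_compat; auto).
        assert (H9 : K ^ 9 * (/ K ^ 10 * q) < q).
        { replace (K ^ 10) with (K * K ^ 9) by ring.
          assert (0 < K ^ 9) by auto. replace (K ^ 9 * (/ (K * K ^ 9) * q)) with (q / K) by (field; try split; lra).
          apply Rmult_lt_reg_l with K. lra. replace (K * (q / K)) with q by (field; lra). nra. }
        assert (H1 := LOW 9%nat _ Hc H9).
        assert (H2 : ps_P Om (fun w => Yof Om X k n w <= M) <= ps_P Om (fun w => Yof Om X k n w <= / K ^ 10 * q)).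
        { apply P_mono; try (apply meas_Yle; auto). intros; lra. }
        assert (H3 := B_small 9 (le_n _)). unfold B in H1. lra.
    + destruct (Rle_or_lt M (K ^ 13 * q)) as [|HMu]; auto. exfalso.
      assert (H1 := UPQ 13%nat).
      assert (H2 : ps_P Om (fun w => ~ Yof Om X k n w < M) <= ps_P Om (fun w => ~ Yof Om X k n w <= K ^ 13 * q)).
      { apply P_mono. apply meas_compl, meas_Ylt; auto. apply meas_compl, meas_Yle; auto. intros; lra. }
      assert (H3 := B_small 13 ltac:(lia)). unfold B in H1. lra.
Qed.
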